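(* Consider the quenched random Lorentz tube described in the context, satisfying the standing assumptions (A1)–(A5). Let $\{S_n\}_{n\ge 0}$ be the cocycle of the exit function $e$ over the point-of-view system $(\Sigma,F,\lambda)$, i.e. $S_0\equiv 0$ and $S_n(x,\ell)=\sum_{k=0}^{n-1} \tilde e(F^k(x,\ell))$ for $n\ge1$, where $\tilde e(x,\ell):=e(x,\ell_0)$. If this cocycle is recurrent, i.e. for $\lambda$-a.e. $\xi\in\Sigma$ there is a subsequence $\{n_j\}_{j\in\mathbb N}$ with $S_{n_j}(\xi)=0$ for all $j$, then for $\Pi$-a.e. $\ell\in\Omega^{\mathbb Z}$ the system $(\mathcal M,T_\ell,\mu)$ is recurrent.
   Context: Geometry. Let $C_0\subset\mathbb R^2$ be a closed polygon two of whose sides, $G^1$ and $G^2$, are parallel and congruent, and let $\tau$ be the translation of $\mathbb R^2$ with $\tau(G^1)=G^2$. Set $C_n:=\tau^n(C_0)$, $G^j_n:=\tau^n(G^j)$ ($n\in\mathbb Z$, $j=1,2$), and the tube $\mathcal T:=\bigcup_{n\in\mathbb Z}C_n$ (so $G^2_n=G^1_{n+1}$). Let $\Omega$ be a measurable space; to each $\omega\in\Omega$ is associated (measurably) a configuration of closed, pairwise disjoint, piecewise smooth, convex, possibly empty sets $\mathcal O_1(\omega),\dots,\mathcal O_N(\omega)\subset C_0$ (scatterers). For a realization $\ell=(\ell_n)_{n\in\mathbb Z}\in\Omega^{\mathbb Z}$, the scatterers in $C_n$ are $\mathcal O_{n,i}(\ell_n):=\tau^n(\mathcal O_i(\ell_n))$.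 The realization $\ell$ is random with law $\Pi$ on $\Omega^{\mathbb Z}$; $\sigma$ is the left shift, $(\sigma\ell)_n=\ell_{n+1}$. Dynamics. The table is $Q_\ell:=\mathcal T\setminus\bigcup_{n,i}\mathcal O_{n,i}(\ell_n)$; the billiard flow on $Q_\ell\times S^1$ is unit-speed free motion in the interior of $Q_\ell$ with elastic reflection (angle of reflection equals angle of incidence) at $\partial Q_\ell$; it is taken right-continuous (post-collisional velocities), and a trajectory hitting a non-smooth point of $\partial Q_\ell$ stays there forever. A trajectory is singular if at some time it hits $\partial Q_\ell$ tangentially or at a vertex. Let $o_j$ be the inner normal of $C_n$ at $G^j_n$ (so $o_2=-o_1$), $\mathcal N^j_n:=\{(q,v)\in G^j_n\times S^1: v\cdot o_j>0\}$ and $\mathcal M:=\bigcup_{n\in\mathbb Z}\bigcup_{j=1,2}\mathcal N^j_n$. $T_\ell:\mathcal M\to\mathcal M$ is the Poincaré (first-return) map of the flow to $\mathcal M$ (successive crossings of the gates $G^j_n$), and $\mu$ is the infinite, $\sigma$-finite invariant measure $d\mu(q,v)=(v\cdot o_j)\,dq\,dv$ on each $\mathcal N^j_n$. The system $(\mathcal M,T_\ell,\mu)$ is called recurrent if for every measurable $A\subseteq\mathcal M$, $\mu$-a.e. $x\in A$ returns to $A$ at least once under $T_\ell$. Standing assumptions. (A1) $\Pi$ is ergodic for $\sigma$. (A2) There is a positive integer $K$ such that for $\Pi$-a.e. $\ell$ each $\partial\mathcal O_{n,i}$ consists of at most $K$ compact connected $C^3$ pieces which may intersect only at their endpoints (vertices).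 (A3) For $x=(q,v)$ let $\gamma(x)$ be the first time the trajectory of $x$ hits a non-flat part of the boundary, and let $k(q)$ be the curvature of $\partial Q_\ell$ at a smooth point $q$ (positive for the convex scatterers). There are constants $0<\gamma_m<\gamma_M$ such that for a.e. $\ell$ and all $x=(q,v)$ with $q\in\partial Q_\ell$ and $k(q)>0$, $\gamma_m\le\gamma(x)\le\gamma_M$; moreover, starting from such $x$ and within time $\gamma(x)$ there are at most $M$ collisions with flat parts of the boundary, $M$ a universal constant. (A4) There is $k_m>0$ such that for a.e. $\ell$ and every smooth point $q$ of $\partial Q_\ell$, either $\partial Q_\ell$ is flat at $q$ or $k(q)\ge k_m$. (A5) For a.e. $\ell$ and all $i,j\in\{1,2\}$ there is a non-singular trajectory entering $C_0$ through $G^i$ and leaving it through $G^j$. Point of view of the particle. Let $\mathcal N^j:=\mathcal N^j_0$, $\mathcal N:=\mathcal N^1\cup\mathcal N^2$, and $\mu_0$ the measure $(v\cdot o_j)\,dq\,dv$ on $\mathcal N$ normalized to 1. For $\omega\in\Omega$ and $x=(q,v)\in\mathcal N$, follow the billiard trajectory of $x$ in $C_0$ with scatterers $\mathcal O_i(\omega)$ until it first crosses $G^1$ or $G^2$, at the point $q_1$ with velocity $v_1$, entering the cell $C_\epsilon$, $\epsilon\in\{-1,+1\}$ (defined for a.e. $x$). Set $R_\omega x:=(\tau^{-\epsilon}(q_1),v_1)\in\mathcal N$ and the exit function $e(x,\omega):=\epsilon$. Define $\Sigma:=\mathcal N\times\Omega^{\mathbb Z}$, $F(x,\ell):=(R_{\ell_0}x,\sigma^{e(x,\ell_0)}(\ell))$,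 and $\lambda:=\mu_0\times\Pi$, a probability measure preserved by $F$. *)

(* Defs.v *)
From HB Require Import structures.
From mathcomp Require Import all_boot all_order all_algebra.
From mathcomp Require Import all_classical all_reals all_analysis.
Set Implicit Arguments. Unset Strict Implicit. Unset Printing Implicit Defensive.
Import Order.TTheory GRing.Theory Num.Theory.
Local Open Scope classical_set_scope.
Local Open Scope ring_scope.

Definition cyl {d} (Om : measurableType d) : set (set (int -> Om)) :=
  [set C | exists (n : int) (A : set Om), measurable A /\
           C = [set l : int -> Om | A (l n)]].

Definition seqZ {d} (Om : measurableType d) := g_sigma_algebraType (@cyl d Om).

Definition shiftz {d} {Om : measurableType d} (k : int) (l : seqZ Om) : seqZ Om :=
  fun n => l (n + k).
Definition lshift {d} {Om : measurableType d} (l : seqZ Om) : seqZ Om := shiftz 1 l.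

Definition shift_ergodic {d} {Om : measurableType d} {R : realType}
  (Pi : probability (seqZ Om) R) : Prop :=
  measurable_fun setT (@lshift d Om) /\
  (forall A : set (seqZ Om), measurable A -> Pi (lshift @^-1` A) = Pi A) /\
  (forall A : set (seqZ Om), measurable A -> lshift @^-1` A = A ->
      Pi A = 0%E \/ Pi A = 1%E).

Definition Fpov {dN d} {N : measurableType dN} {Om : measurableType d}
  (Rm : Om -> N -> N) (e : N -> Om -> int) (xi : N * seqZ Om) : N * seqZ Om :=
  (Rm (xi.2 0) xi.1, shiftz (e xi.1 (xi.2 0)) xi.2).

Definition cocycle {dN d} {N : measurableType dN} {Om : measurableType d}
  (Rm : Om -> N -> N) (e : N -> Om -> int) (n : nat) (xi : N * seqZ Om) : int :=
  \sum_(k < n) (let y := iter k (Fpov Rm e) xi in e y.1 (y.2 0)).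

(* M = union over n in Z of the gate sets N^j_n; the point tau^n(x), x in N,
   is encoded as (n, x) : int * N. *)
Definition slice {N : Type} (n : int) (A : set (int * N)) : set N :=
  [set x | A (n, x)].

Definition measurableM {dN} {N : measurableType dN} (A : set (int * N)) : Prop :=
  forall n, measurable (slice n A).

(* mu on M, up to the irrelevant normalisation constant of mu_0. *)
Definition muM {dN} {N : measurableType dN} {R : realType}
  (mu0 : probability N R) (A : set (int * N)) : \bar R :=
  (\esum_(n in [set: int]) mu0 (slice n A))%E.

Definition negligibleM {dN} {N : measurableType dN} {R : realType}
  (mu0 : probability N R) (B : set (int * N)) : Prop :=
  exists C, [/\ measurableM C, B `<=` C & muM mu0 C = 0%E].

(* Poincare map to the gates: from tau^n(x) the particle moves in the cell C_n
   with scatterers O_i(l_n) and exits into C_{n + e(x,l_n)}. *)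
Definition Tmap {dN d} {N : measurableType dN} {Om : measurableType d}
  (Rm : Om -> N -> N) (e : N -> Om -> int) (l : seqZ Om) (p : int * N) : int * N :=
  (p.1 + e p.2 (l p.1), Rm (l p.1) p.2).

Definition preserves_muM {dN} {N : measurableType dN} {R : realType}
  (mu0 : probability N R) (T : int * N -> int * N) : Prop :=
  forall A, measurableM A -> measurableM (T @^-1` A) /\ muM mu0 (T @^-1` A) = muM mu0 A.

Definition recurrentM {dN} {N : measurableType dN} {R : realType}
  (mu0 : probability N R) (T : int * N -> int * N) : Prop :=
  forall A, measurableM A ->
    negligibleM mu0 [set p | A p /\ forall k : nat, (0 < k)%N -> ~ A (iter k T p)].

(* Main.v *)
Require Import Defs.
From HB Require Import structures.
From mathcomp Require Import all_boot all_order all_algebra.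
From mathcomp Require Import all_classical all_reals all_analysis.
Import Order.TTheory GRing.Theory Num.Theory.
Local Open Scope classical_set_scope.
Local Open Scope ring_scope.
Set Implicit Arguments. Unset Strict Implicit.

Lemma muM_ge0 (R : realType) dN (N : measurableType dN) (mu0 : probability N R)
  (X : set (int * N)) : measurableM X -> (0 <= muM mu0 X)%E.
Proof. move=> mX; apply: esum_ge0 => n _; exact: measure_ge0. Qed.

Lemma muM_cell (R : realType) dN (N : measurableType dN) (mu0 : probability N R)
  (n : int) (X : set (int * N)) : X `<=` [set p | p.1 = n] ->
  muM mu0 X = mu0 (slice n X).
Proof.
move=> Xn; rewrite /muM.
transitivity (\esum_(m in [set: int]) (if m \in [set n] then mu0 (slice m X) else 0))%E.
  apply: eq_esum => m _; case: ifPn => // /negP; rewrite inE /= => mn.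
  rewrite (_ : slice m X = set0) ?measure0 //.
  by apply/seteqP; split => // x /Xn /= mE; exfalso; apply: mn.
by rewrite -esum_mkcondl setIT esum_set1.
Qed.

Lemma muM_slice0 (R : realType) dN (N : measurableType dN) (mu0 : probability N R)
  (X : set (int * N)) : (forall n, mu0 (slice n X) = 0%E) -> muM mu0 X = 0%E.
Proof. by move=> h; apply: esum1 => n _; exact: h. Qed.

Lemma muMU (R : realType) dN (N : measurableType dN) (mu0 : probability N R)
  (X Y : set (int * N)) : measurableM X -> measurableM Y -> X `&` Y = set0 ->
  muM mu0 (X `|` Y) = (muM mu0 X + muM mu0 Y)%E.
Proof.
move=> mX mY XY; rewrite /muM -esumD; last 2 first.
- by move=> n _; exact: measure_ge0.
- by move=> n _; exact: measure_ge0.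
apply: eq_esum => n _; rewrite -measureU //.
apply/seteqP; split => // x [Xx Yx].
have : (X `&` Y) (n, x) by [].
by rewrite XY.
Qed.

Lemma iter_pre (R : realType) dN (N : measurableType dN) (mu0 : probability N R)
  (T : int * N -> int * N) : preserves_muM mu0 T ->
  forall k A, measurableM A ->
  measurableM ((iter k T) @^-1` A) /\ muM mu0 ((iter k T) @^-1` A) = muM mu0 A.
Proof.
move=> HT; elim=> [|k IH] A mA /=; first by split.
have -> : iter k.+1 T @^-1` A = iter k T @^-1` (T @^-1` A).
  by apply/seteqP; split => p; rewrite /preimage /=.
have /= [mTA muTA] := HT A mA.
have [m1 mu1] := IH _ mTA.
by split => //; rewrite mu1.
Qed.

Definition cellS {N : Type} (n : int) (E : set N) : set (int * N) :=
  [set p | p.1 = n /\ E p.2].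

Lemma mM_cellS dN (N : measurableType dN) n (E : set N) :
  measurable E -> measurableM (cellS n E).
Proof.
move=> mE m; rewrite /slice /cellS /=.
have [->|mn] := eqVneq m n.
  by rewrite (_ : [set x | n = n /\ E x] = E) //; apply/seteqP; split=> x //= [].
by rewrite (_ : [set x | m = n /\ E x] = set0) //; apply/seteqP; split=> [x /= [mn' _]|x //]; move: mn; rewrite mn' eqxx.
Qed.

Lemma mM_I dN (N : measurableType dN) (X Y : set (int * N)) :
  measurableM X -> measurableM Y -> measurableM (X `&` Y).
Proof. by move=> mX mY m; exact: (measurableI _ _ (mX m) (mY m)). Qed.

Lemma mM_C dN (N : measurableType dN) (X : set (int * N)) :
  measurableM X -> measurableM (~` X).
Proof. by move=> mX m; exact: (measurableC (mX m)). Qed.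

Lemma mM_bigcap dN (N : measurableType dN) (F : nat -> set (int * N)) (P : set nat) :
  (forall k, P k -> measurableM (F k)) -> measurableM (\bigcap_(k in P) F k).
Proof. by move=> mF m; exact: (@bigcap_measurableType _ _ (fun k => slice m (F k)) P (fun k Pk => mF k Pk m)). Qed.

Lemma mM_bigcup dN (N : measurableType dN) (F : nat -> set (int * N)) (P : set nat) :
  (forall k, P k -> measurableM (F k)) -> measurableM (\bigcup_(k in P) F k).
Proof. by move=> mF m; exact: (@bigcup_measurable _ _ (fun k => slice m (F k)) P (fun k Pk => mF k Pk m)). Qed.

Definition Gs {N : Type} (T : int * N -> int * N) (n : int) (E : set N) (k : nat) :
  set (int * N) :=
  (iter k T) @^-1` cellS n E `&`
  \bigcap_(s in [set s | (s < k)%N]) ((iter s T) @^-1` (~` cellS n setT)).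

Definition Hs {N : Type} (T : int * N -> int * N) (n : int) (E : set N) (k : nat) :
  set N := slice n (T @^-1` Gs T n E k).

Definition retS {N : Type} (T : int * N -> int * N) (n : int) (E : set N) : set N :=
  \bigcup_k Hs T n E k.

Lemma Gs_uniq {N : Type} (T : int * N -> int * N) n (E E' : set N) j k p :
  Gs T n E j p -> Gs T n E' k p -> j = k.
Proof.
move=> [[c1 _] h1] [[c2 _] h2].
case: (ltngtP j k) => // jk.
- by exfalso; apply: (h2 j jk).
- by exfalso; apply: (h1 k jk).
Qed.

Lemma Hs_triv {N : Type} (T : int * N -> int * N) n (E : set N) :
  trivIset setT (Hs T n E).
Proof.
move=> i j _ _ [x [/= hi hj]].
exact: (Gs_uniq hi hj).
Qed.

Lemma Gs_meas (R : realType) dN (N : measurableType dN) (mu0 : probability N R)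
  (T : int * N -> int * N) n (E : set N) k :
  preserves_muM mu0 T -> measurable E -> measurableM (Gs T n E k).
Proof.
move=> HT mE; apply: mM_I.
  exact: (iter_pre HT k (mM_cellS n mE)).1.
apply: mM_bigcap => s _.
exact: (iter_pre HT s (mM_C (mM_cellS n (@measurableT _ N)))).1.
Qed.

Lemma iterT (A : Type) (f : A -> A) k p : iter k f (f p) = iter k.+1 f p.
Proof. by rewrite iterSr. Qed.

Lemma Gs_step {N : Type} (T : int * N -> int * N) n (E : set N) k :
  T @^-1` Gs T n E k = (T @^-1` Gs T n E k `&` cellS n setT) `|` Gs T n E k.+1.
Proof.
apply/seteqP; split => p.
- move=> hp; have [c|c] := pselect (cellS n setT p); [left|right]; first by split.
  case: hp => [hc hs]; split; first by move: hc => /=; rewrite iterT.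
  move=> [|s] sk; first exact: c.
  by have := hs s sk; rewrite /= iterT.
- case=> [[]//|[hc hs]]; split; first by move: hc => /=; rewrite iterT.
  by move=> s sk; have := hs s.+1 sk; rewrite /= iterT.
Qed.

Lemma retS_le (R : realType) dN (N : measurableType dN) (mu0 : probability N R)
  (T : int * N -> int * N) n (E : set N) :
  preserves_muM mu0 T -> measurable E -> (mu0 (retS T n E) <= mu0 E)%E.
Proof.
move=> HT mE.
have mG k := Gs_meas n k HT mE.
have mH k : measurable (Hs T n E k) by exact: ((HT _ (mG k)).1 n).
have step k : muM mu0 (Gs T n E k) = (mu0 (Hs T n E k) + muM mu0 (Gs T n E k.+1))%E.
  rewrite -(HT _ (mG k)).2 {1}Gs_step muMU; last 3 first.
  - by apply: mM_I; [exact: (HT _ (mG k)).1|exact: mM_cellS].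
  - exact: mG.
  - apply/seteqP; split => // p [[_ c] [_ hs]].
    by exfalso; apply: (hs 0%N).
  rewrite (@muM_cell _ _ _ _ n); last by move=> p [_ []].
  congr (_ + _)%E; congr (mu0 _).
  by apply/seteqP; split => x; [case|].
have G0 : muM mu0 (Gs T n E 0) = mu0 E.
  rewrite (@muM_cell _ _ _ _ n); last by move=> p [[]].
  congr (mu0 _); apply/seteqP; split => x; [by case=> [[]]|by move=> Ex; split].
have sum m : mu0 E = (\sum_(k < m) mu0 (Hs T n E k) + muM mu0 (Gs T n E m))%E.
  elim: m => [|m IH]; first by rewrite big_ord0 add0e G0.
  by rewrite big_ord_recr /= -addeA -step.
rewrite /retS measure_bigcup //; last exact: Hs_triv.
apply: lime_le; first by apply: is_cvg_nneseries => k _ _; exact: measure_ge0.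
apply: nearW => m /=.
rewrite (sum m) big_mkord.
under eq_bigl do rewrite in_setT.
by apply: leeDl; exact: muM_ge0.
Qed.

Lemma mu_fin (R : realType) dN (N : measurableType dN) (mu0 : probability N R)
  (X : set N) : measurable X -> mu0 X \is a fin_num.
Proof.
move=> mX; rewrite ge0_fin_numE ?measure_ge0 //.
by apply: (le_lt_trans (probability_le1 _ mX)); exact: ltry.
Qed.

Lemma retS_meas (R : realType) dN (N : measurableType dN) (mu0 : probability N R)
  (T : int * N -> int * N) n (E : set N) :
  preserves_muM mu0 T -> measurable E -> measurable (retS T n E).
Proof.
move=> HT mE; apply: bigcupT_measurable => k.
exact: ((HT _ (Gs_meas n k HT mE)).1 n).
Qed.

Lemma first_return {N : Type} (T : int * N -> int * N) n x t :
  (0 < t)%N -> (iter t T (n, x)).1 = n ->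
  exists k, [/\ (k < t)%N, (iter k.+1 T (n, x)).1 = n &
     forall s, (s < k)%N -> ~ cellS n setT (iter s T (T (n, x)))].
Proof.
move=> t0 ht.
have ex : exists t, (0 < t)%N && ((iter t T (n, x)).1 == n).
  by exists t; rewrite t0 ht eqxx.
case: (ex_minnP ex) => t1 /andP[t10 /eqP h1] tmin.
exists t1.-1; rewrite prednK //; split => //.
- by have := tmin t; rewrite t0 ht eqxx => /(_ isT).
- move=> s ss [/= hs _]; move: hs; rewrite iterT => hs.
  have := tmin s.+1; rewrite hs eqxx /= => /(_ isT).
  move=> le; move: ss; rewrite -(leq_add2r 1) !addn1 prednK // => ss.
  by have := leq_trans ss le; rewrite ltnn.
Qed.

Lemma retS_eq (R : realType) dN (N : measurableType dN) (mu0 : probability N R)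
  (T : int * N -> int * N) n (E Z : set N) :
  preserves_muM mu0 T -> measurable E -> measurable Z -> mu0 Z = 0%E ->
  (forall x, ~ Z x -> exists t : nat, (0 < t)%N /\ (iter t T (n, x)).1 = n) ->
  mu0 (retS T n E) = mu0 E.
Proof.
move=> HT mE mZ Z0 hZ.
have mCE : measurable (~` E) by exact: measurableC.
have mr1 := retS_meas n HT mE.
have mr2 := retS_meas n HT mCE.
have le1 := retS_le n HT mE.
have le2 := retS_le n HT mCE.
have disj : retS T n E `&` retS T n (~` E) = set0.
  apply/seteqP; split => // x [[i _ hi] [j _ hj]].
  have ij := Gs_uniq hi hj; subst j.
  by case: hi => [[_ Ei] _]; case: hj => [[_ NEi] _].
have cover : [set: N] `<=` (retS T n E `|` retS T n (~` E)) `|` Z.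
  move=> x _; have [Zx|nZx] := pselect (Z x); first by right.
  left; have [t [t0 ht]] := hZ x nZx.
  have [k [_ hk hs]] := first_return t0 ht.
  have [Ek|NEk] := pselect (E (iter k.+1 T (n, x)).2).
  - left; exists k => //; split => //; split => //.
    by rewrite iterT.
    by rewrite iterT.
  - right; exists k => //; split => //; split => //.
    by rewrite iterT.
    by rewrite iterT.
have h1 : (1 <= mu0 (retS T n E) + mu0 (retS T n (~` E)))%E.
  rewrite -(probability_setT mu0) -measureU //.
  apply: (le_trans (le_measure _ _ _ cover)); rewrite ?inE //.
  - by apply: measurableU => //; exact: measurableU.
  - apply: (le_trans (measureU2 _ _ _)) => //; first exact: measurableU.
    have Z0' : (mu0 Z <= 0)%E by rewrite Z0.
    by apply: (le_trans (leeD (lexx _) Z0')); rewrite adde0.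
have h2 : (mu0 E + mu0 (~` E) = 1)%E.
  rewrite -measureU // ?setUCr; first exact: probability_setT.
  by rewrite setICr.
apply/eqP; rewrite eq_le le1 /= leNgt; apply/negP => lt1.
have := lte_leD (mu_fin mu0 mr2) lt1 le2.
by rewrite h2 ltNge h1.
Qed.

Lemma pair_cell {N : Type} (p : int * N) n : p.1 = n -> p = (n, p.2).
Proof. by case: p => a b /= ->. Qed.

Lemma det_rec (R : realType) dN (N : measurableType dN) (mu0 : probability N R)
  (T : int * N -> int * N) : preserves_muM mu0 T ->
  (forall n : int, exists Z : set N, [/\ measurable Z, mu0 Z = 0%E &
     forall x, ~ Z x -> exists t : nat, (0 < t)%N /\ (iter t T (n, x)).1 = n]) ->
  recurrentM mu0 T.
Proof.
move=> HT hZ A mA.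
pose B := A `&` \bigcap_(k in [set k | (0 < k)%N]) ((iter k T) @^-1` (~` A)).
have mB : measurableM B.
  apply: mM_I => //; apply: mM_bigcap => k _.
  exact: (iter_pre HT k (mM_C mA)).1.
exists B; split => //.
apply: muM_slice0 => n.
have [Z [mZ Z0 hz]] := hZ n.
pose W := slice n B.
have mW : measurable W := mB n.
pose vis t := slice n ((iter t T) @^-1` cellS n W).
have mvis t : measurable (vis t) := (iter_pre HT t (mM_cellS n mW)).1 n.
pose P := \bigcup_t vis t.
pose Q := \bigcup_t vis t.+1.
have mP : measurable P by exact: bigcupT_measurable.
have mQ : measurable Q by apply: bigcupT_measurable => t; exact: mvis.
have hPWQ : P = W `|` Q.
  apply/seteqP; split => x.
  - move=> [[|t] _ [ht hw]]; first by left.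
    by right; exists t.
  - case=> [Wx|[t _ hv]]; first by exists 0%N.
    by exists t.+1.
have hWQ : W `&` Q = set0.
  apply/seteqP; split => // x [[Ax hx] [t _ [ht hw]]].
  have h := hx t.+1 isT; exfalso; apply: h.
  rewrite (pair_cell ht); by case: hw.
have hQ : Q = retS T n P.
  apply/seteqP; split => x.
  - move=> [t _ [ht hw]].
    have [k [kt hk hs]] := first_return (ltn0Sn t) ht.
    exists k => //; split; last exact: hs.
    change (cellS n P (iter k T (T (n, x)))); rewrite iterT; split => //.
    exists (t - k)%N => //.
    change (cellS n W (iter (t - k) T (n, (iter k.+1 T (n, x)).2))).
    rewrite -(pair_cell hk) -iterD addnS subnK; last by rewrite -ltnS.
    by split.
  - move=> [k _ [[hk1 hk2] _]].
    move: hk1 hk2; rewrite iterT => hk1 [t _ hv].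
    have : cellS n W (iter t T (n, (iter k.+1 T (n, x)).2)) by exact: hv.
    rewrite -(pair_cell hk1) -iterD addnS => hc.
    by exists (t + k)%N.
have e1 : mu0 P = (mu0 W + mu0 Q)%E by rewrite hPWQ measureU.
have e2 : mu0 Q = mu0 P by rewrite hQ; exact: (retS_eq HT mP mZ Z0 hz).
have fP := mu_fin mu0 mP.
rewrite e2 in e1.
have : (mu0 W + mu0 P - mu0 P = mu0 P - mu0 P)%E by rewrite -e1.
by rewrite addeK // subee.
Qed.

Lemma shiftzC d (Om : measurableType d) (a b : int) (l : seqZ Om) :
  shiftz a (shiftz b l) = shiftz (a + b) l.
Proof. by apply: funext => m; rewrite /shiftz addrA. Qed.

Lemma shiftz0 d (Om : measurableType d) (l : seqZ Om) : shiftz 0 l = l.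
Proof. by apply: funext => m; rewrite /shiftz addr0. Qed.

Lemma cocycleS dN d (N : measurableType dN) (Om : measurableType d)
  (Rm : Om -> N -> N) (e : N -> Om -> int) t xi :
  cocycle Rm e t.+1 xi = cocycle Rm e t xi +
    (let y := iter t (Fpov Rm e) xi in e y.1 (y.2 0)).
Proof. by rewrite /cocycle big_ord_recr. Qed.

Lemma iterF dN d (N : measurableType dN) (Om : measurableType d)
  (Rm : Om -> N -> N) (e : N -> Om -> int) t xi :
  (iter t (Fpov Rm e) xi).2 = shiftz (cocycle Rm e t xi) xi.2.
Proof.
elim: t => [|t IH]; first by rewrite /cocycle big_ord0 shiftz0.
by rewrite iterS /= IH shiftzC cocycleS /= IH addrC.
Qed.

Lemma iterTmap dN d (N : measurableType dN) (Om : measurableType d)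
  (Rm : Om -> N -> N) (e : N -> Om -> int) l n x t :
  iter t (Tmap Rm e l) (n, x) =
  (n + cocycle Rm e t (x, shiftz n l), (iter t (Fpov Rm e) (x, shiftz n l)).1).
Proof.
elim: t => [|t IH]; first by rewrite /cocycle big_ord0 addr0.
rewrite iterS IH cocycleS /= iterF /=.
have -> : shiftz (cocycle Rm e t (x, shiftz n l)) (shiftz n l) 0 =
          l (n + cocycle Rm e t (x, shiftz n l)).
  by rewrite /shiftz add0r addrC.
by rewrite addrA.
Qed.

Lemma shiftz_meas d (Om : measurableType d) (k : int) :
  measurable_fun [set: seqZ Om] (shiftz k).
Proof.
apply: (@measurability _ _ _ _ _ _ (@cyl d Om : set (set (seqZ Om)))).
  by [].
move=> _ [C [m [A [mA ->]]] <-].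
apply: sub_sigma_algebra; exists (m + k), A; split => //.
by apply/seteqP; split => l //= [].
Qed.

Lemma shiftz_inv d (Om : measurableType d) (R : realType)
  (Pi : probability (seqZ Om) R) : shift_ergodic Pi ->
  forall (k : int) (A : set (seqZ Om)), measurable A ->
  Pi (shiftz k @^-1` A) = Pi A.
Proof.
move=> [_ [inv _]].
have pos (k : nat) A : measurable A -> Pi (shiftz k%:Z @^-1` A) = Pi A.
  elim: k A => [|k IH] A mA.
    by congr (Pi _); apply/seteqP; split => l /=; rewrite shiftz0.
  have -> : shiftz k.+1%:Z @^-1` A = Defs.lshift @^-1` (shiftz k%:Z @^-1` A).
    apply/seteqP; split => l /=; rewrite /Defs.lshift shiftzC -addn1 PoszD addrC //.
  rewrite inv; first exact: IH.
  by have := shiftz_meas (Om:=Om) k%:Z measurableT mA; rewrite setTI.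
move=> [k|k] A mA; first exact: pos.
have mA' : measurable (shiftz (Negz k) @^-1` A).
  by have := shiftz_meas (Om:=Om) (Negz k) measurableT mA; rewrite setTI.
rewrite -(pos k.+1 _ mA').
congr (Pi _); apply/seteqP; split => l /=; rewrite shiftzC NegzE addNr shiftz0 //.
Qed.

Unset Implicit Arguments.

Theorem proposition4p1 (R : realType) (dN d : measure_display)
  (N : measurableType dN) (Om : measurableType d)
  (mu0 : probability N R) (Pi : probability (seqZ Om) R)
  (Rm : Om -> N -> N) (e : N -> Om -> int) :
  shift_ergodic Pi ->
  (forall x w, e x w = 1 \/ e x w = -1) ->
  measurable_fun [set: N * Om] (fun p => Rm p.2 p.1) ->
  measurable [set p : N * Om | e p.1 p.2 = 1] ->
  measurable_fun [set: N * seqZ Om] (Fpov Rm e) ->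
  (forall A : set (N * seqZ Om), measurable A ->
     (mu0 \x Pi)%E (Fpov Rm e @^-1` A) = (mu0 \x Pi)%E A) ->
  {ae Pi, forall l, preserves_muM mu0 (Tmap Rm e l)} ->
  {ae (mu0 \x Pi)%E, forall xi, exists nj : nat -> nat,
       {homo nj : i j / (i < j)%N} /\ forall j, cocycle Rm e (nj j) xi = 0} ->
  {ae Pi, forall l, recurrentM mu0 (Tmap Rm e l)}.
Proof.
move=> Herg _ _ _ _ _ Hpres Hrec.
pose Good (xi : N * seqZ Om) :=
  exists t : nat, (0 < t)%N /\ cocycle Rm e t xi = 0.
have aeG : {ae (mu0 \x Pi)%E, forall xi, Good xi}.
  apply: filterS Hrec => xi [nj [hom h]]; exists (nj 1%N); split => //.
  exact: (leq_ltn_trans (leq0n _) (hom 0%N 1%N isT)).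
case: aeG => Z [mZ Z0 subZ].
have Z0' : (mu0 \x^ Pi)%E Z = 0%E.
  rewrite -Z0; apply/esym; apply: product_measure_unique => // A B mA mB.
  exact: product_measure2E.
have mf := @measurable_fun_ysection _ _ _ _ _ mu0 _ mZ.
set f := (mu0 \o ysection Z) in mf.
have int0 : (\int[Pi]_(x in setT) `|f x| = 0)%E.
  rewrite -Z0'; apply: eq_integral => l _.
  by rewrite gee0_abs //; exact: measure_ge0.
have ae0 := (ae_eq_integral_abs Pi measurableT mf).1 int0.
case: ae0 => N0 [mN0 PN0 subN0].
have aen (n : int) : {ae Pi, forall l, f (shiftz n l) = 0%E}.
  exists (shiftz n @^-1` N0); split.
  - by have := shiftz_meas n measurableT mN0; rewrite setTI.
  - by rewrite shiftz_inv.
  - by move=> l /= hl; apply: subN0 => /=; apply/not_implyP; split.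
have aeall : {ae Pi, forall l, forall n : int, f (shiftz n l) = 0%E}.
  have : {ae Pi, forall l, forall k : nat,
      f (shiftz (Posz k) l) = 0%E /\ f (shiftz (Negz k) l) = 0%E}.
    apply: ae_foralln => k.
    by apply: filterS2 (aen (Posz k)) (aen (Negz k)) => l h1 h2; split.
  by apply: filterS => l h [k|k]; [exact: (h k).1 | exact: (h k).2].
apply: filterS2 Hpres aeall => l hp ha.
apply: det_rec => // n.
exists (ysection Z (shiftz n l)); split.
- exact: (measurable_ysection _ mZ).
- exact: ha n.
- move=> x hx.
  have : Good (x, shiftz n l).
    apply: contrapT => ng; apply: hx; rewrite /ysection /= inE; exact: subZ.
  move=> [t [t0 ht]]; exists t; split => //; by rewrite iterTmap /= ht addr0.
Qed.
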